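(* The map $\tau_{sm}:\widetilde{\mathbb{K}}_{sm}\to\widetilde{\mathbb{K}}_{co}$, $[(r_\varepsilon)_\varepsilon]\mapsto[(r_\varepsilon)_\varepsilon]$, is a ring isomorphism; i.e., $\widetilde{\mathbb{K}}_{sm}\cong\widetilde{\mathbb{K}}_{co}$ via $\tau_{sm}$.
   Context: Let $I=(0,1]$ and $\mathbb{K}\in\{\mathbb{R},\mathbb{C}\}$. Let $\mathcal{E}_M=\{(r_\varepsilon)_\varepsilon\in\mathbb{K}^I:\exists N\in\mathbb{N}: |r_\varepsilon|=O(\varepsilon^{-N})\text{ as }\varepsilon\to0\}$ and $\mathcal{N}=\{(r_\varepsilon)_\varepsilon\in\mathbb{K}^I:\forall m\in\mathbb{N}: |r_\varepsilon|=O(\varepsilon^{m})\}$. Let $\mathcal{E}_{M,co}$, $\mathcal{N}_{co}$ (resp. $\mathcal{E}_{M,sm}$, $\mathcal{N}_{sm}$) be the subsets of $\mathcal{E}_M$, $\mathcal{N}$ consisting of nets with $\varepsilon\mapsto r_\varepsilon$ continuous (resp. smooth) on $I$; $\widetilde{\mathbb{K}}_{co}=\mathcal{E}_{M,co}/\mathcal{N}_{co}$ and $\widetilde{\mathbb{K}}_{sm}=\mathcal{E}_{M,sm}/\mathcal{N}_{sm}$ are rings with componentwise operations. *)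

(* Defs.v *)
From Stdlib Require Import Reals.
From Coquelicot Require Import Coquelicot.
Open Scope R_scope.

Inductive Kfield : Type := KR | KC.

Definition Kty (k : Kfield) : Type := match k with KR => R | KC => C end.

Definition Kabs (k : Kfield) : Kty k -> R :=
  match k return Kty k -> R with KR => Rabs | KC => Cmod end.

Definition Ksub (k : Kfield) : Kty k -> Kty k -> Kty k :=
  match k return Kty k -> Kty k -> Kty k with
  | KR => fun x y => x - y
  | KC => fun x y => Cminus x y end.

(* Nets (r_eps)_{eps in I}, I = (0,1]; represented as functions R -> K whose
   values outside I are irrelevant (all definitions only look at eps in I). *)
Definition net (k : Kfield) : Type := R -> Kty k.

Definition inI (e : R) : Prop := 0 < e <= 1.

Definition net_sub {k : Kfield} (r s : net k) : net k := fun e => Ksub k (r e) (s e).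

Definition moderate {k : Kfield} (r : net k) : Prop :=
  exists (N : nat) (c eta : R), 0 < eta /\
    forall e, 0 < e < eta -> e <= 1 -> Kabs k (r e) <= c / (e ^ N).

Definition negligible {k : Kfield} (r : net k) : Prop :=
  forall m : nat, exists (c eta : R), 0 < eta /\
    forall e, 0 < e < eta -> e <= 1 -> Kabs k (r e) <= c * (e ^ m).

Definition cont_I {k : Kfield} (r : net k) : Prop :=
  forall x, inI x -> forall eps, 0 < eps -> exists delta, 0 < delta /\
    forall y, inI y -> Rabs (y - x) < delta -> Kabs k (Ksub k (r y) (r x)) < eps.

Definition smooth_on_open (a b : R) (f : R -> R) : Prop :=
  forall (n : nat) (x : R), a < x < b -> ex_derive_n f n x.

Definition Ksmooth_on_open (k : Kfield) (a b : R) : (R -> Kty k) -> Prop :=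
  match k return (R -> Kty k) -> Prop with
  | KR => fun f => smooth_on_open a b f
  | KC => fun f => smooth_on_open a b (fun x => fst (f x)) /\
                   smooth_on_open a b (fun x => snd (f x)) end.

(* eps |-> r_eps smooth on I = (0,1]: it agrees on I with a function that is
   C^infinity on an open interval (0, 1 + delta) containing I (so that the
   closed endpoint 1 is handled; this is the strongest standard reading). *)
Definition smooth_I {k : Kfield} (r : net k) : Prop :=
  exists (g : net k) (delta : R), 0 < delta /\
    (forall e, inI e -> g e = r e) /\ Ksmooth_on_open k 0 (1 + delta) g.

Definition EM_co {k : Kfield} (r : net k) : Prop := moderate r /\ cont_I r.
Definition N_co  {k : Kfield} (r : net k) : Prop := negligible r /\ cont_I r.
Definition EM_sm {k : Kfield} (r : net k) : Prop := moderate r /\ smooth_I r.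
Definition N_sm  {k : Kfield} (r : net k) : Prop := negligible r /\ smooth_I r.

(* Equality in the quotient rings K_co = EM_co / N_co and K_sm = EM_sm / N_sm *)
Definition eq_co {k : Kfield} (r s : net k) : Prop := N_co (net_sub r s).
Definition eq_sm {k : Kfield} (r s : net k) : Prop := N_sm (net_sub r s).

(* Main.v *)
Require Import Defs.
From Stdlib Require Import Reals Lra Lia Classical ClassicalDescription ClassicalEpsilon.
From Coquelicot Require Import Coquelicot.
Open Scope R_scope.

Fixpoint Dn (n : nat) (f : R -> R) : Prop :=
  match n with
  | O => True
  | S n => exists f', (forall x, is_derive f x (f' x)) /\ Dn n f'
  end.

Lemma isd_plus f g x a b : is_derive f x a -> is_derive g x b ->
  is_derive (fun y => f y + g y) x (a + b).
Proof. intros; now apply (is_derive_plus f g). Qed.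

Lemma isd_mult f g x a b : is_derive f x a -> is_derive g x b ->
  is_derive (fun y => f y * g y) x (a * g x + f x * b).
Proof. intros Ha Hb. apply (is_derive_mult f g x a b Ha Hb). intros; apply Rmult_comm. Qed.

Lemma Dn_ext n f g : (forall x, f x = g x) -> Dn n f -> Dn n g.
Proof.
  destruct n as [|n]; simpl; auto.
  intros H [f' [H1 H2]]. exists f'; split; auto.
  intro x. apply is_derive_ext with f; auto.
Qed.

Lemma Dn_weak n f : Dn (S n) f -> Dn n f.
Proof.
  revert f; induction n as [|n IH]; simpl; auto.
  intros f [f' [H1 H2]]. exists f'; split; auto.
Qed.

Lemma Dn_const n c : Dn n (fun _ => c).
Proof.
  revert c; induction n as [|n IH]; intro c; simpl; auto.
  exists (fun _ => 0); split; auto. intro x. apply (is_derive_const c x).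
Qed.

Lemma Dn_id n : Dn n (fun x => x).
Proof.
  destruct n as [|n]; simpl; auto.
  exists (fun _ => 1); split. intro x; apply (is_derive_id x). apply Dn_const.
Qed.

Lemma Dn_plus n f g : Dn n f -> Dn n g -> Dn n (fun x => f x + g x).
Proof.
  revert f g; induction n as [|n IH]; simpl; auto.
  intros f g [f' [H1 H2]] [g' [H3 H4]].
  exists (fun x => f' x + g' x); split; auto.
  intro x; apply isd_plus; auto.
Qed.

Lemma Dn_scal n c f : Dn n f -> Dn n (fun x => c * f x).
Proof.
  revert f; induction n as [|n IH]; simpl; auto.
  intros f [f' [H1 H2]].
  exists (fun x => c * f' x); split; auto.
  intro x; apply is_derive_scal; auto.
Qed.

Lemma Dn_mult n f g : Dn n f -> Dn n g -> Dn n (fun x => f x * g x).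
Proof.
  revert f g; induction n as [|n IH]; simpl; auto.
  intros f g Hf Hg.
  pose proof (Dn_weak n f Hf) as Wf. pose proof (Dn_weak n g Hg) as Wg.
  destruct Hf as [f' [H1 H2]]. destruct Hg as [g' [H3 H4]].
  exists (fun x => f' x * g x + f x * g' x); split.
  intro x; apply isd_mult; auto.
  apply Dn_plus; apply IH; auto.
Qed.

Lemma Dn_inv n u : (forall x, u x <> 0) -> Dn n u -> Dn n (fun x => / u x).
Proof.
  intro Hnz. revert u Hnz; induction n as [|n IH]; simpl; auto.
  intros u Hnz Hu. pose proof (Dn_weak n u Hu) as Wu.
  destruct Hu as [u' [H1 H2]].
  exists (fun x => (-1) * u' x * (/ u x * / u x)); split.
  - intro x. eapply is_derive_ext. intro t; reflexivity.
    replace ((-1) * u' x * (/ u x * / u x)) with (- u' x / u x ^ 2).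
    apply is_derive_inv; auto. field. auto.
  - apply Dn_mult. apply Dn_scal; auto. apply Dn_mult; apply IH; auto.
Qed.

Lemma Dn_affine n a c f : Dn n f -> Dn n (fun x => f (a * x + c)).
Proof.
  revert f; induction n as [|n IH]; simpl; auto.
  intros f [f' [H1 H2]].
  exists (fun x => a * f' (a * x + c)); split.
  - intro x. 
    assert (Hg : is_derive (fun y => a * y + c) x a).
    { auto_derive; auto; ring. }
    pose proof (is_derive_comp f (fun y => a * y + c) x _ _ (H1 (a*x+c)) Hg) as H.
    exact H.
  - apply Dn_scal. apply IH; auto.
Qed.

Lemma Dn_ex n f : Dn (S n) f -> forall x, ex_derive (Derive_n f n) x.
Proof.
  revert f; induction n as [|n IH]; intros f Hf x.
  - destruct Hf as [f' [H1 _]]. simpl. exists (f' x); auto.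
  - destruct Hf as [f' [H1 H2]].
    assert (E : forall t, Derive_n f' n t = Derive_n f (S n) t).
    { intro t. replace (S n) with (n + 1)%nat by lia. rewrite <- (Derive_n_comp f n 1). 
      apply Derive_n_ext. intro y. simpl. symmetry. apply is_derive_unique. auto. }
    apply ex_derive_ext with (Derive_n f' n); auto.
Qed.

Lemma Dn_exn f : (forall n, Dn n f) -> forall n x, ex_derive_n f n x.
Proof.
  intros H [|n] x; simpl; auto. apply Dn_ex; auto.
Qed.
Definition phi (k : nat) (x : R) : R :=
  if Rlt_dec 0 x then (/ x) ^ k * exp (- / x) else 0.

Lemma exp_n n z : exp (INR n * z) = exp z ^ n.
Proof.
  induction n as [|n IH]. simpl. rewrite Rmult_0_l. apply exp_0.
  rewrite S_INR. replace ((INR n + 1) * z) with (INR n * z + z) by ring.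
  rewrite exp_plus, IH. simpl. ring.
Qed.

Lemma flat n x : 0 < x -> exp (- / x) <= (INR n * x) ^ n.
Proof.
  intro Hx. destruct n as [|n].
  - simpl. rewrite <- exp_0. left. apply exp_increasing.
    assert (0 < / x) by (apply Rinv_0_lt_compat; auto). lra.
  - set (N := INR (S n)). assert (HN : 0 < N) by (apply lt_0_INR; lia).
    set (y := / x). assert (Hy : 0 < y) by (apply Rinv_0_lt_compat; auto).
    assert (E1 : exp y = exp (y / N) ^ S n).
    { rewrite <- exp_n. f_equal. unfold N. field. fold N. lra. }
    assert (E2 : (y / N) ^ S n <= exp y).
    { rewrite E1. apply pow_incr. split.
      - unfold Rdiv. apply Rmult_le_pos; [lra | left; apply Rinv_0_lt_compat; auto].
      - pose proof (exp_ineq1_le (y / N)). lra. }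
    assert (P : 0 < (y / N) ^ S n).
    { apply pow_lt. unfold Rdiv. apply Rmult_lt_0_compat; auto. apply Rinv_0_lt_compat; auto. }
    rewrite exp_Ropp.
    replace ((N * x) ^ S n) with (/ ((y / N) ^ S n)).
    apply Rinv_le_contravar; auto.
    rewrite <- pow_inv. f_equal. unfold y. field. split; lra.
Qed.

Lemma phi_pos k x : 0 < x -> phi k x = (/ x) ^ k * exp (- / x).
Proof. intro H. unfold phi. destruct (Rlt_dec 0 x); [auto | lra]. Qed.
Lemma phi_npos k x : x <= 0 -> phi k x = 0.
Proof. intro H. unfold phi. destruct (Rlt_dec 0 x); [lra | auto]. Qed.

Lemma phi_deriv k x : is_derive (phi k) x (- INR k * phi (S k) x + phi (S (S k)) x).
Proof.
  destruct (Rlt_dec 0 x) as [Hx | Hx].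
  - rewrite !phi_pos by auto.
    apply is_derive_ext_loc with (fun y => (/ y) ^ k * exp (- / y)).
    { apply locally_open with (fun u => 0 < u). apply open_gt.
      intros y Hy. rewrite phi_pos; auto. auto. }
    auto_derive. lra.
    destruct k as [|k]; simpl; field; lra.
  - destruct (Rlt_dec x 0) as [Hx' | Hx'].
    + rewrite !phi_npos by lra.
      apply is_derive_ext_loc with (fun _ => 0).
      { apply locally_open with (fun u => u < 0). apply open_lt.
        intros y Hy. rewrite phi_npos; auto. lra. auto. }
      replace (- INR k * 0 + 0) with (@zero R_AbsRing). apply (is_derive_const 0 x).
      simpl. unfold zero; simpl. ring.
    + assert (x = 0) by lra. subst x.
      rewrite !phi_npos by lra. replace (- INR k * 0 + 0) with 0 by ring.
      apply is_derive_Reals. intros eps Heps.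
      set (C := (INR (S (S k)))^(S (S k))).
      assert (HC : 0 < C) by (apply pow_lt; apply lt_0_INR; lia).
      assert (Hd : 0 < eps / C) by (apply Rdiv_lt_0_compat; auto).
      exists (mkposreal _ Hd). intros h Hh Hlt. simpl in Hlt.
      rewrite Rplus_0_l, (phi_npos k 0) by lra.
      destruct (Rlt_dec 0 h) as [Hp | Hn].
      * rewrite phi_pos by auto.
        pose proof (flat (S (S k)) h Hp) as F.
        rewrite Rpow_mult_distr in F. fold C in F.
        assert (B1 : 0 <= ((/ h) ^ k * exp (- / h) - 0) / h - 0).
        { replace (((/ h) ^ k * exp (- / h) - 0) / h - 0) with ((/ h) ^ (S k) * exp (- / h)) by (simpl; field; lra).
          apply Rmult_le_pos. apply pow_le. left; apply Rinv_0_lt_compat; auto. left; apply exp_pos. }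
        rewrite Rabs_right by lra.
        replace (((/ h) ^ k * exp (- / h) - 0) / h - 0) with ((/ h) ^ (S k) * exp (- / h)) by (simpl; field; lra).
        apply Rle_lt_trans with ((/ h) ^ (S k) * (C * h ^ S (S k))).
        { apply Rmult_le_compat_l; auto. apply pow_le. left; apply Rinv_0_lt_compat; auto. }
        replace ((/ h) ^ (S k) * (C * h ^ S (S k))) with (C * h).
        2:{ rewrite pow_inv. simpl. field. split; [|lra]. apply pow_nonzero. lra. }
        rewrite Rabs_right in Hlt by lra.
        apply Rmult_lt_reg_l with (/ C). apply Rinv_0_lt_compat; auto.
        replace (/ C * (C * h)) with h by (field; lra).
        replace (/ C * eps) with (eps / C) by (unfold Rdiv; ring). auto.
      * rewrite phi_npos by lra. replace ((0 - 0) / h - 0) with 0 by (field; auto).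
        rewrite Rabs_R0; auto.
Qed.

Lemma Dn_phi n : forall k, Dn n (phi k).
Proof.
  induction n as [|n IH]; intro k; simpl; auto.
  exists (fun x => - INR k * phi (S k) x + phi (S (S k)) x); split.
  intro x; apply phi_deriv.
  apply Dn_plus. apply Dn_scal. apply IH. apply IH.
Qed.
Definition sig (x : R) : R := phi 0 x / (phi 0 x + phi 0 (1 - x)).

Lemma phi0_nonneg x : 0 <= phi 0 x.
Proof. unfold phi. destruct (Rlt_dec 0 x). simpl. rewrite Rmult_1_l. left; apply exp_pos. lra. Qed.
Lemma phi0_pos x : 0 < x -> 0 < phi 0 x.
Proof. intro H. rewrite phi_pos by auto. simpl. rewrite Rmult_1_l. apply exp_pos. Qed.

Lemma den_pos x : 0 < phi 0 x + phi 0 (1 - x).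
Proof.
  destruct (Rlt_dec 0 x).
  - pose proof (phi0_pos x r). pose proof (phi0_nonneg (1 - x)). lra.
  - pose proof (phi0_pos (1 - x) ltac:(lra)). pose proof (phi0_nonneg x). lra.
Qed.

Lemma Dn_sig n : Dn n sig.
Proof.
  unfold sig, Rdiv. apply Dn_mult. apply Dn_phi.
  apply Dn_inv. intro x. pose proof (den_pos x); lra.
  apply Dn_plus. apply Dn_phi.
  apply Dn_ext with (fun x => phi 0 ((-1) * x + 1)).
  intro x; f_equal; ring. apply Dn_affine. apply Dn_phi.
Qed.

Lemma sig_0 x : x <= 0 -> sig x = 0.
Proof. intro H. unfold sig. rewrite (phi_npos 0 x H). unfold Rdiv; ring. Qed.
Lemma sig_1 x : 1 <= x -> sig x = 1.
Proof. intro H. unfold sig. rewrite (phi_npos 0 (1 - x)) by lra. rewrite Rplus_0_r.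
  field. pose proof (phi0_pos x ltac:(lra)); lra. Qed.
Lemma sig_range x : 0 <= sig x <= 1.
Proof.
  unfold sig. pose proof (den_pos x). pose proof (phi0_nonneg x). pose proof (phi0_nonneg (1-x)).
  split.
  - unfold Rdiv. apply Rmult_le_pos; auto. left; apply Rinv_0_lt_compat; auto.
  - apply Rmult_le_reg_r with (phi 0 x + phi 0 (1 - x)); auto.
    unfold Rdiv. rewrite Rmult_assoc, Rinv_l by lra. lra.
Qed.

Definition contR (r : R -> R) : Prop :=
  forall x, 0 < x <= 1 -> forall eps, 0 < eps -> exists delta, 0 < delta /\
    forall y, 0 < y <= 1 -> Rabs (y - x) < delta -> Rabs (r y - r x) < eps.

Ltac dle := repeat match goal with |- context [Rle_dec ?a ?b] => destruct (Rle_dec a b) | H : context [Rle_dec ?a ?b] |- _ => destruct (Rle_dec a b) end.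
Ltac dleH H := repeat match type of H with context [Rle_dec ?a ?b] => destruct (Rle_dec a b) end.

Lemma clamp_lip a x y : a <= x <= 1 -> Rabs (Rmax a (Rmin 1 y) - x) <= Rabs (y - x).
Proof.
  intro H. unfold Rmax, Rmin. dle;
  unfold Rabs; repeat match goal with |- context [Rcase_abs ?a] => destruct (Rcase_abs a) end; lra.
Qed.

Lemma uc r : contR r -> forall a, 0 < a <= 1 -> forall eps, 0 < eps -> exists d, 0 < d /\
  forall x y, a <= x <= 1 -> a <= y <= 1 -> Rabs (x - y) < d -> Rabs (r x - r y) < eps.
Proof.
  intros Hr a Ha eps Heps.
  set (f := fun y => r (Rmax a (Rmin 1 y))).
  assert (Hf : forall x, a <= x <= 1 -> continuity_pt f x).
  { intros x Hx. unfold continuity_pt, continue_in, limit1_in, limit_in. simpl.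
    intros e He. destruct (Hr x ltac:(lra) e He) as [d [Hd H]].
    exists d; split; auto. intros y [_ Hy]. unfold R_dist in *. unfold f.
    replace (Rmax a (Rmin 1 x)) with x.
    2:{ unfold Rmax, Rmin. dle; lra. }
    apply H.
    - unfold Rmax, Rmin. dle; lra.
    - eapply Rle_lt_trans; [|exact Hy].
      apply clamp_lip; lra. }
  destruct (Heine f (fun c => a <= c <= 1) (compact_P3 a 1) Hf (mkposreal eps Heps)) as [d Hd].
  exists d; split. apply cond_pos. intros x y Hx Hy Hxy.
  pose proof (Hd x y Hx Hy Hxy) as H. unfold f in H. simpl in H.
  replace (Rmax a (Rmin 1 x)) with x in H.
  replace (Rmax a (Rmin 1 y)) with y in H. auto.
  unfold Rmax, Rmin. dle; lra.
  unfold Rmax, Rmin. dle; lra.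
Qed.

Definition EE (x : R) : R := exp (- / x).

Lemma EE_pos x : 0 < EE x.
Proof. apply exp_pos. Qed.

Lemma EE_mono a b : 0 < a -> a <= b -> EE a <= EE b.
Proof.
  intros Ha Hab. unfold EE. destruct (Req_dec a b). subst; lra.
  left. apply exp_increasing. apply Ropp_lt_contravar. apply Rinv_lt_contravar.
  apply Rmult_lt_0_compat; lra. lra.
Qed.

Definition Hset (r : R -> R) (t d : R) : Prop :=
  0 < d <= t / 4 /\ forall x y, t / 2 <= x <= 1 -> t / 2 <= y <= 1 ->
    Rabs (x - y) <= d -> Rabs (r x - r y) <= EE (t / 2).

Lemma Hset_ne r t : contR r -> 0 < t <= 1 -> exists d, Hset r t d.
Proof.
  intros Hr Ht. destruct (uc r Hr (t/2) ltac:(lra) (EE (t/2)) (EE_pos _)) as [d [Hd H]].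
  exists (Rmin (d/2) (t/4)). split.
  - split. apply Rmin_glb_lt; lra. apply Rmin_r.
  - intros x y Hx Hy Hxy. left. apply H; auto.
    pose proof (Rmin_l (d/2) (t/4)). lra.
Qed.

Lemma Hset_mono r t t' d : 0 < t -> t <= t' -> Hset r t d -> Hset r t' d.
Proof.
  intros Ht Htt [[H1 H2] H]. split. lra.
  intros x y Hx Hy Hxy. eapply Rle_trans. apply H; auto; lra.
  apply EE_mono; lra.
Qed.

Lemma Hset_down r t d d' : Hset r t d -> 0 < d' <= d -> Hset r t d'.
Proof.
  intros [[H1 H2] H] Hd. split. lra. intros x y Hx Hy Hxy. apply H; auto; lra.
Qed.

Definition lubv (P : R -> Prop) : R :=
  match excluded_middle_informative (exists m, is_lub P m) with
  | left H => proj1_sig (constructive_indefinite_description _ H)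
  | right _ => 0 end.

Lemma lubv_spec P : (exists m, is_lub P m) -> is_lub P (lubv P).
Proof.
  intro H. unfold lubv. destruct (excluded_middle_informative _) as [H'|H'].
  - destruct (constructive_indefinite_description _ H'); auto.
  - contradiction.
Qed.

Definition hs (r : R -> R) (t : R) : R := lubv (Hset r t) / 2.

Lemma hs_lub r t : contR r -> 0 < t <= 1 -> is_lub (Hset r t) (lubv (Hset r t)).
Proof.
  intros Hr Ht. apply lubv_spec.
  destruct (completeness (Hset r t)) as [m Hm].
  - exists (t/4). intros d [[H1 H2] _]. auto.
  - apply Hset_ne; auto.
  - exists m; auto.
Qed.

Lemma hs_spec r t : contR r -> 0 < t <= 1 -> Hset r t (hs r t).
Proof.
  intros Hr Ht. pose proof (hs_lub r t Hr Ht) as [Hub Hl].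
  destruct (Hset_ne r t Hr Ht) as [d0 Hd0].
  assert (Hm : 0 < lubv (Hset r t)) by (pose proof (Hub d0 Hd0); destruct Hd0 as [[? ?] ?]; lra).
  destruct (Classical_Prop.classic (exists d, Hset r t d /\ lubv (Hset r t) / 2 < d)) as [[d [Hd Hlt]]|Hn].
  - apply Hset_down with d; auto. unfold hs; lra.
  - exfalso. assert (Hb : is_upper_bound (Hset r t) (lubv (Hset r t) / 2)).
    { intros d Hd. destruct (Rle_dec d (lubv (Hset r t) / 2)); auto. exfalso; apply Hn; exists d; split; auto; lra. }
    pose proof (Hl _ Hb). lra.
Qed.

Lemma hs_mono r t t' : contR r -> 0 < t -> t <= t' -> t' <= 1 -> hs r t <= hs r t'.
Proof.
  intros Hr Ht Htt Ht'. unfold hs.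
  pose proof (hs_lub r t Hr ltac:(lra)) as [Hub Hl].
  pose proof (hs_lub r t' Hr ltac:(lra)) as [Hub' Hl'].
  assert (lubv (Hset r t) <= lubv (Hset r t')).
  { apply Hl. intros d Hd. apply Hub'. apply Hset_mono with t; auto. }
  lra.
Qed.

Fixpoint grid (r : R -> R) (j : nat) : R :=
  match j with O => 1 | S j => grid r j - hs r (grid r j) end.

Lemma grid_pos r : contR r -> forall j, 0 < grid r j <= 1 /\ 3/4 * grid r j <= grid r (S j) < grid r j.
Proof.
  intros Hr. induction j as [|j IH].
  - simpl. pose proof (hs_spec r 1 Hr ltac:(lra)) as [[H1 H2] _]. lra.
  - destruct IH as [IH1 IH2]. assert (0 < grid r (S j) <= 1) by lra. split; auto.
    change (grid r (S (S j))) with (grid r (S j) - hs r (grid r (S j))). pose proof (hs_spec r _ Hr H) as [[H1 H2] _]. lra.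
Qed.

Lemma grid_decr r : contR r -> forall j j', (j <= j')%nat -> grid r j' <= grid r j.
Proof.
  intros Hr j j' H. induction H. lra. pose proof (grid_pos r Hr m). lra.
Qed.

Lemma grid_small r : contR r -> forall x, 0 < x -> exists K, grid r K < x.
Proof.
  intros Hr x Hx. set (x' := Rmin x 1).
  assert (Hx' : 0 < x' <= 1) by (unfold x', Rmin; dle; lra).
  destruct (Classical_Prop.classic (exists K, grid r K < x')) as [[K HK]|Hn].
  - exists K. pose proof (Rmin_l x 1). fold x' in H. lra.
  - exfalso. assert (HK : forall K, x' <= grid r K).
    { intro K. destruct (Rle_dec x' (grid r K)); auto. exfalso; apply Hn; exists K; lra. }
    set (c := hs r x'). pose proof (hs_spec r x' Hr Hx') as [[Hc _] _]. fold c in Hc.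
    assert (Hb : forall K, grid r K <= 1 - INR K * c).
    { induction K as [|K IH]. simpl; lra.
      change (grid r (S K)) with (grid r K - hs r (grid r K)). rewrite S_INR.
      pose proof (hs_mono r x' (grid r K) Hr ltac:(lra) (HK K) ltac:(apply (grid_pos r Hr K))).
      fold c in H. lra. }
    destruct (INR_unbounded (/ c)) as [n Ha].
    pose proof (Hb n). pose proof (grid_pos r Hr n).
    assert (INR n * c > 1).
    { apply Rmult_lt_reg_r with (/ c). apply Rinv_0_lt_compat; auto.
      rewrite Rmult_assoc, Rinv_r, Rmult_1_l, Rmult_1_r by lra. lra. }
    lra.
Qed.

Lemma grid_cover r : contR r -> forall x, 0 < x <= 1 -> exists k, grid r (S k) <= x <= grid r k.
Proof.
  intros Hr x Hx. destruct (grid_small r Hr x ltac:(lra)) as [K HK].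
  revert HK. induction K as [|K IH]; intro HK.
  - simpl in HK. lra.
  - destruct (Rle_dec x (grid r K)).
    + exists K; lra.
    + apply IH; lra.
Qed.

Fixpoint psum (f : nat -> R) (K : nat) : R :=
  match K with O => 0 | S K => psum f K + f K end.

Definition bb (r : R -> R) (j : nat) : R := r (grid r j) - r (grid r (S j)).
Definition sj (r : R -> R) (j : nat) (x : R) : R :=
  sig ((x - grid r (S j)) / (grid r j - grid r (S j))).
Definition FF (r : R -> R) (K : nat) (x : R) : R :=
  r (grid r 0) - psum (fun j => bb r j * (1 - sj r j x)) K.

Definition Nx (r : R -> R) (x : R) : nat :=
  match excluded_middle_informative (exists K, grid r K < x) with
  | left H => proj1_sig (constructive_indefinite_description _ H)
  | right _ => O end.

Definition ss (r : R -> R) (x : R) : R := FF r (Nx r x) x.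


Lemma sj_one r j x : contR r -> grid r j <= x -> sj r j x = 1.
Proof.
  intros Hr H. unfold sj. apply sig_1. pose proof (grid_pos r Hr j).
  apply Rmult_le_reg_r with (grid r j - grid r (S j)). lra.
  unfold Rdiv. rewrite Rmult_assoc, Rinv_l by lra. lra.
Qed.

Lemma sj_zero r j x : contR r -> x <= grid r (S j) -> sj r j x = 0.
Proof.
  intros Hr H. unfold sj. apply sig_0. pose proof (grid_pos r Hr j).
  unfold Rdiv. apply Rmult_le_0_r. lra. left; apply Rinv_0_lt_compat; lra.
Qed.

Lemma FF_stable r K K' x : contR r -> grid r K < x -> (K <= K')%nat -> FF r K' x = FF r K x.
Proof.
  intros Hr HK HKK. induction HKK. auto.
  rewrite <- IHHKK. unfold FF. cbn [psum]. rewrite sj_one; auto. ring. pose proof (grid_decr r Hr K m HKK). lra.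
Qed.

Lemma ss_eq r K x : contR r -> grid r K < x -> ss r x = FF r K x.
Proof.
  intros Hr HK. unfold ss, Nx. destruct (excluded_middle_informative _) as [H|H].
  - destruct (constructive_indefinite_description _ H) as [K' HK']. simpl.
    destruct (Nat.le_ge_cases K K').
    + apply FF_stable; auto.
    + symmetry; apply FF_stable; auto.
  - exfalso; apply H; exists K; auto.
Qed.

Lemma Dn_FF r K n : Dn n (FF r K).
Proof.
  unfold FF. apply Dn_ext with (fun x => r (grid r 0) + (-1) * psum (fun j => bb r j * (1 - sj r j x)) K).
  intro; ring. apply Dn_plus. apply Dn_const. apply Dn_scal.
  induction K as [|K IH]; simpl. apply Dn_const.
  apply Dn_plus; auto. apply Dn_scal.
  apply Dn_ext with (fun x => 1 + (-1) * sj r K x). intro; ring.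
  apply Dn_plus. apply Dn_const. apply Dn_scal. unfold sj.
  apply Dn_ext with (fun x => sig (/ (grid r K - grid r (S K)) * x + (- grid r (S K) / (grid r K - grid r (S K))))).
  intro x. f_equal. unfold Rdiv. ring.
  apply Dn_affine. apply Dn_sig.
Qed.

Lemma ss_smooth r : contR r -> forall n x, 0 < x -> ex_derive_n (ss r) n x.
Proof.
  intros Hr n x Hx. destruct (grid_small r Hr x Hx) as [K HK].
  apply ex_derive_n_ext_loc with (FF r K).
  - apply locally_open with (fun u => grid r K < u). apply open_gt.
    intros y Hy. symmetry. apply ss_eq; auto. auto.
  - apply Dn_exn. intro; apply Dn_FF.
Qed.

Lemma FF_low r k x : contR r -> x <= grid r k -> forall K, (K <= k)%nat -> FF r K x = r (grid r K).
Proof.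
  intros Hr Hx. induction K as [|K IH]; intro HK.
  - unfold FF; cbn [psum]; ring.
  - pose proof (IH ltac:(lia)) as IH'. unfold FF in *. cbn [psum]. rewrite sj_zero; auto.
    rewrite Rminus_0_r, Rmult_1_r. unfold bb in *. lra. pose proof (grid_decr r Hr (S K) k HK). lra.
Qed.

Lemma ss_val r k x : contR r -> grid r (S k) <= x <= grid r k ->
  ss r x = sj r k x * r (grid r k) + (1 - sj r k x) * r (grid r (S k)).
Proof.
  intros Hr Hx. rewrite (ss_eq r (S (S k))); auto.
  2:{ pose proof (grid_pos r Hr (S k)). lra. }
  unfold FF. cbn [psum]. rewrite (sj_one r (S k) x Hr) by lra.
  pose proof (FF_low r k x Hr ltac:(lra) k (le_n k)) as H. unfold FF in H.
  replace (psum (fun j => bb r j * (1 - sj r j x)) k) with (r (grid r 0) - r (grid r k)) by lra.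
  unfold bb. ring.
Qed.

Lemma ss_err r : contR r -> forall x, 0 < x <= 1 -> Rabs (ss r x - r x) <= EE x.
Proof.
  intros Hr x Hx. destruct (grid_cover r Hr x Hx) as [k Hk].
  rewrite (ss_val r k x Hr Hk).
  set (l := sj r k x). assert (Hl : 0 <= l <= 1) by apply sig_range.
  pose proof (grid_pos r Hr k) as [Hg1 Hg2].
  pose proof (hs_spec r (grid r k) Hr Hg1) as [[Hh1 Hh2] H].
  assert (Eq : grid r (S k) = grid r k - hs r (grid r k)) by reflexivity.
  assert (HE : EE (grid r k / 2) <= EE x) by (apply EE_mono; lra).
  assert (A : Rabs (r (grid r k) - r x) <= EE x).
  { eapply Rle_trans; [|exact HE]. apply H; try lra. rewrite Rabs_right; lra. }
  assert (B : Rabs (r (grid r (S k)) - r x) <= EE x).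
  { eapply Rle_trans; [|exact HE]. apply H; try lra. rewrite Rabs_left1; lra. }
  replace (l * r (grid r k) + (1 - l) * r (grid r (S k)) - r x)
    with (l * (r (grid r k) - r x) + (1 - l) * (r (grid r (S k)) - r x)) by ring.
  eapply Rle_trans. apply Rabs_triang. rewrite !Rabs_mult.
  rewrite (Rabs_right l), (Rabs_right (1 - l)) by lra.
  assert (l * Rabs (r (grid r k) - r x) <= l * EE x) by (apply Rmult_le_compat_l; lra).
  assert ((1 - l) * Rabs (r (grid r (S k)) - r x) <= (1 - l) * EE x) by (apply Rmult_le_compat_l; lra).
  lra.
Qed.

Lemma core_real r : contR r -> exists s : R -> R,
  (forall n x, 0 < x -> ex_derive_n s n x) /\
  (forall x, 0 < x <= 1 -> Rabs (s x - r x) <= EE x).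
Proof.
  intro Hr. exists (ss r). split. apply ss_smooth; auto. apply ss_err; auto.
Qed.

Lemma Cmod_le_sum (z : C) : Cmod z <= Rabs (fst z) + Rabs (snd z).
Proof.
  unfold Cmod. destruct z as [a b]; cbn [fst snd].
  pose proof (Rabs_pos a). pose proof (Rabs_pos b).
  rewrite <- (sqrt_pow2 (Rabs a + Rabs b)) by lra.
  apply sqrt_le_1_alt. rewrite <- (pow2_abs a), <- (pow2_abs b). nra.
Qed.

Lemma Cfst_le (z : C) : Rabs (fst z) <= Cmod z.
Proof. pose proof (Rmax_Cmod z). pose proof (Rmax_l (Rabs (fst z)) (Rabs (snd z))). lra. Qed.
Lemma Csnd_le (z : C) : Rabs (snd z) <= Cmod z.
Proof. pose proof (Rmax_Cmod z). pose proof (Rmax_r (Rabs (fst z)) (Rabs (snd z))). lra. Qed.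

Lemma Kabs_tri0 k (a b : Kty k) : Kabs k a <= Kabs k b + Kabs k (Ksub k a b).
Proof.
  destruct k; simpl in *.
  - replace a with (b + (a - b)) at 1 by ring. apply Rabs_triang.
  - replace a with (Cplus b (Cminus a b)) at 1.
    apply Cmod_triangle. destruct a, b. unfold Cminus, Cplus, Copp; simpl. f_equal; ring.
Qed.

Lemma Ksub_tri k (a b c d : Kty k) :
  Kabs k (Ksub k (Ksub k a b) (Ksub k c d)) <= Kabs k (Ksub k a c) + Kabs k (Ksub k b d).
Proof.
  destruct k; simpl in *.
  - replace (a - b - (c - d)) with ((a - c) + - (b - d)) by ring.
    rewrite <- (Rabs_Ropp (b - d)). apply Rabs_triang.
  - replace (Cminus (Cminus a b) (Cminus c d)) with (Cplus (Cminus a c) (Copp (Cminus b d))).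
    rewrite <- (Cmod_opp (Cminus b d)). apply Cmod_triangle.
    destruct a, b, c, d. unfold Cminus, Cplus, Copp; simpl. f_equal; ring.
Qed.

Lemma exd_cont f x : ex_derive f x -> forall eps, 0 < eps -> exists d, 0 < d /\
  forall y, Rabs (y - x) < d -> Rabs (f y - f x) < eps.
Proof.
  intros H eps Heps.
  pose proof (proj2 (continuity_pt_filterlim f x) (ex_derive_continuous f x H)) as Hc.
  unfold continuity_pt, continue_in, limit1_in, limit_in in Hc. simpl in Hc.
  destruct (Hc eps Heps) as [d [Hd H']]. exists d; split; auto.
  intros y Hy. destruct (Req_dec y x). subst. unfold Rminus. rewrite Rplus_opp_r, Rabs_R0; auto.
  apply H'. split. split. exact I. auto. auto.
Qed.

Lemma smooth_cont k (r : net k) : smooth_I r -> cont_I r.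
Proof.
  intros [g [delta [Hd [Hg Hs]]]] x Hx eps Heps.
  assert (HxD : 0 < x < 1 + delta) by (unfold inI in Hx; lra).
  destruct k; simpl in *.
  - assert (Hex : ex_derive g x) by exact (Hs 1%nat x HxD).
    destruct (exd_cont g x Hex eps Heps) as [d [Hd' H]].
    exists d; split; auto. intros y Hy Hyx. rewrite <- (Hg y Hy), <- (Hg x Hx). apply H; auto.
  - destruct Hs as [Hs1 Hs2].
    destruct (exd_cont _ x (Hs1 1%nat x HxD) (eps/2) ltac:(lra)) as [d1 [Hd1 H1]].
    destruct (exd_cont _ x (Hs2 1%nat x HxD) (eps/2) ltac:(lra)) as [d2 [Hd2 H2]].
    exists (Rmin d1 d2); split. apply Rmin_glb_lt; auto.
    intros y Hy Hyx. rewrite <- (Hg y Hy), <- (Hg x Hx).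
    eapply Rle_lt_trans. apply Cmod_le_sum.
    pose proof (Rmin_l d1 d2). pose proof (Rmin_r d1 d2).
    assert (A := H1 y ltac:(lra)). assert (B := H2 y ltac:(lra)). simpl in A, B.
    unfold Cminus, Cplus, Copp; simpl. unfold Rminus in A, B. lra.
Qed.

Lemma loc_int (a b x : R) : a < x < b -> locally x (fun y => a < y < b).
Proof.
  intro H. apply locally_open with (fun y => a < y /\ y < b).
  apply open_and. apply open_gt. apply open_lt. auto. auto.
Qed.

Lemma smooth_minus (a b : R) (f g : R -> R) : smooth_on_open a b f -> smooth_on_open a b g ->
  smooth_on_open a b (fun x => f x - g x).
Proof.
  intros Hf Hg n x Hx. apply ex_derive_n_minus.
  - eapply filter_imp; [|apply (loc_int a b x Hx)]. intros y Hy k _. apply Hf; auto.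
  - eapply filter_imp; [|apply (loc_int a b x Hx)]. intros y Hy k _. apply Hg; auto.
Qed.

Lemma smooth_shrink (a b b' : R) (f : R -> R) : b' <= b -> smooth_on_open a b f -> smooth_on_open a b' f.
Proof. intros H Hf n x Hx. apply Hf. lra. Qed.

Lemma smooth_sub k (r s : net k) : smooth_I r -> smooth_I s -> smooth_I (net_sub r s).
Proof.
  intros [g [d [Hd [Hg Hs]]]] [g' [d' [Hd' [Hg' Hs']]]].
  exists (net_sub g g'), (Rmin d d'). split. apply Rmin_glb_lt; auto. split.
  - intros e He. unfold net_sub. rewrite Hg, Hg'; auto.
  - pose proof (Rmin_l d d'). pose proof (Rmin_r d d').
    destruct k; simpl in *.
    + apply smooth_minus; eapply smooth_shrink; eauto; lra.
    + destruct Hs as [A B]. destruct Hs' as [A' B']. split.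
      * intros n x Hx. apply ex_derive_n_ext with (fun x => fst (g x) - fst (g' x)).
        intro t. unfold net_sub; simpl. reflexivity.
        apply (smooth_minus 0 (1 + Rmin d d')); try (eapply smooth_shrink; eauto; lra); auto.
      * intros n x Hx. apply ex_derive_n_ext with (fun x => snd (g x) - snd (g' x)).
        intro t. unfold net_sub; simpl. reflexivity.
        apply (smooth_minus 0 (1 + Rmin d d')); try (eapply smooth_shrink; eauto; lra); auto.
Qed.

Lemma EE_le1 x : 0 < x -> EE x <= 1.
Proof. intro H. pose proof (flat 0 x H). simpl in H0. unfold EE; lra. Qed.

Lemma pow_le1 e N : 0 <= e <= 1 -> e ^ N <= 1.
Proof. intro H. induction N; simpl. lra. assert (0 <= e ^ N) by (apply pow_le; lra). nra. Qed.

Lemma moderate_transfer k (r s : net k) : moderate r ->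
  (forall e, inI e -> Kabs k (Ksub k (s e) (r e)) <= 2) -> moderate s.
Proof.
  intros [N [c [eta [Heta H]]]] Hb. exists N, (c + 2), eta. split; auto.
  intros e He He1. pose proof (H e He He1) as A. pose proof (Hb e ltac:(unfold inI; lra)) as B.
  pose proof (Kabs_tri0 k (s e) (r e)) as T.
  assert (P : 0 < e ^ N) by (apply pow_lt; lra).
  assert (Q : e ^ N <= 1) by (apply pow_le1; lra).
  assert (2 <= 2 / e ^ N).
  { apply Rmult_le_reg_r with (e ^ N); auto. unfold Rdiv. rewrite Rmult_assoc, Rinv_l by lra. nra. }
  unfold Rdiv in *. rewrite Rmult_plus_distr_r. lra.
Qed.

Lemma negl_EE k (s r : net k) :
  (forall e, inI e -> Kabs k (Ksub k (s e) (r e)) <= 2 * EE e) -> negligible (net_sub s r).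
Proof.
  intros H m. exists (2 * INR m ^ m), 1. split. lra.
  intros e He He1. unfold net_sub. eapply Rle_trans. apply H. unfold inI; lra.
  pose proof (flat m e ltac:(lra)). rewrite Rpow_mult_distr in H0. unfold EE. lra.
Qed.

Lemma cont_sub k (r s : net k) : cont_I r -> cont_I s -> cont_I (net_sub r s).
Proof.
  intros Hr Hs x Hx eps Heps.
  destruct (Hr x Hx (eps/2) ltac:(lra)) as [d1 [Hd1 H1]].
  destruct (Hs x Hx (eps/2) ltac:(lra)) as [d2 [Hd2 H2]].
  exists (Rmin d1 d2); split. apply Rmin_glb_lt; auto.
  intros y Hy Hyx. pose proof (Rmin_l d1 d2). pose proof (Rmin_r d1 d2).
  unfold net_sub. eapply Rle_lt_trans. apply Ksub_tri.
  pose proof (H1 y Hy ltac:(lra)). pose proof (H2 y Hy ltac:(lra)). lra.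
Qed.

Lemma contR_of (r : R -> R) : @cont_I KR r -> contR r.
Proof.
  intros H x Hx eps He. destruct (H x Hx eps He) as [d [Hd H']]. exists d; split; auto.
Qed.

Lemma surj_core k (r : net k) : cont_I r -> exists s : net k, smooth_I s /\
  forall e, inI e -> Kabs k (Ksub k (s e) (r e)) <= 2 * EE e.
Proof.
  intro Hr. destruct k.
  - destruct (core_real r (contR_of r Hr)) as [s [Hs He]].
    exists s. split.
    + exists s, 1. split. lra. split. auto. intros n x Hx. apply Hs. lra.
    + intros e Hee. simpl. pose proof (He e Hee). pose proof (EE_pos e). lra.
  - assert (H1 : contR (fun x => fst (r x))).
    { intros x Hx eps He. destruct (Hr x Hx eps He) as [d [Hd H']]. exists d; split; auto.
      intros y Hy Hyx. eapply Rle_lt_trans; [|apply (H' y Hy Hyx)]. simpl.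
      eapply Rle_trans; [|apply Cfst_le]. unfold Cminus, Cplus, Copp; simpl. right; reflexivity. }
    assert (H2 : contR (fun x => snd (r x))).
    { intros x Hx eps He. destruct (Hr x Hx eps He) as [d [Hd H']]. exists d; split; auto.
      intros y Hy Hyx. eapply Rle_lt_trans; [|apply (H' y Hy Hyx)]. simpl.
      eapply Rle_trans; [|apply Csnd_le]. unfold Cminus, Cplus, Copp; simpl. right; reflexivity. }
    destruct (core_real _ H1) as [s1 [Hs1 He1]].
    destruct (core_real _ H2) as [s2 [Hs2 He2]].
    exists (fun x => (s1 x, s2 x) : C). split.
    + exists (fun x => (s1 x, s2 x) : C), 1. split. lra. split. auto. simpl. split.
      * intros n x Hx. apply Hs1. lra.
      * intros n x Hx. apply Hs2. lra.
    + intros e Hee. simpl. eapply Rle_trans. apply Cmod_le_sum.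
      pose proof (He1 e Hee). pose proof (He2 e Hee).
      unfold Cminus, Cplus, Copp; simpl. unfold Rminus in *. lra.
Qed.

Theorem theorem3p6 :
  forall k : Kfield,
    (* well defined *)
    (forall r : net k, EM_sm r -> EM_co r) /\
    (forall r s : net k, EM_sm r -> EM_sm s -> eq_sm r s -> eq_co r s) /\
    (* injective *)
    (forall r s : net k, EM_sm r -> EM_sm s -> eq_co r s -> eq_sm r s) /\
    (* surjective *)
    (forall r : net k, EM_co r -> exists s : net k, EM_sm s /\ eq_co s r).
Proof.
  intro k. split; [|split; [|split]].
  - intros r [Hm Hs]. split; auto. apply smooth_cont; auto.
  - intros r s _ _ [Hn Hs]. split; auto. apply smooth_cont; auto.
  - intros r s [_ Hr] [_ Hs] [Hn _]. split; auto. apply smooth_sub; auto.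
  - intros r [Hm Hc]. destruct (surj_core k r Hc) as [s [Hs He]].
    exists s. split. split; auto.
    + apply moderate_transfer with r; auto. intros e Hee. eapply Rle_trans. apply He; auto.
      pose proof (EE_le1 e ltac:(unfold inI in Hee; lra)). lra.
    + split. apply negl_EE; auto. apply cont_sub; auto. apply smooth_cont; auto.
Qed.
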